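(* Let $H$ be a complex Hadamard matrix of order $n$, and let $T$ be a trade in $H$. Then $|T|\ge n$.
   Context: A complex Hadamard matrix of order $n$ is an $n\times n$ matrix with all entries of modulus $1$ and $HH^{\ast}=nI_n$. A trade in $H$ is a nonempty set $T$ of positions (entries) of $H$ which can be altered to obtain a different complex Hadamard matrix, i.e. there is a complex Hadamard matrix $K$ of order $n$ with $K_{ij}\neq H_{ij}$ for $(i,j)\in T$ and $K_{ij}=H_{ij}$ for $(i,j)\notin T$. The size of $T$ is its number of entries $|T|$. *)

(* Defs.v *)
From HB Require Import structures.
From mathcomp Require Import all_boot all_order all_algebra.
From mathcomp Require Import reals complex.
Set Implicit Arguments. Unset Strict Implicit. Unset Printing Implicit Defensive.
Import Order.TTheory GRing.Theory Num.Theory.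
Local Open Scope ring_scope.

Definition adjmx (C : numClosedFieldType) (m n : nat) (A : 'M[C]_(m, n)) : 'M[C]_(n, m) :=
  \matrix_(i < n, j < m) (A j i)^*.

Definition complex_hadamard (R : realType) (n : nat) (H : 'M[R[i]]_n) : Prop :=
  (forall i j, `|H i j| = 1) /\ H *m adjmx H = (n%:R)%:M.

Definition is_trade (R : realType) (n : nat) (H : 'M[R[i]]_n)
    (T : {set 'I_n * 'I_n}) : Prop :=
  T != set0 /\
  exists K : 'M[R[i]]_n, complex_hadamard K /\
    (forall i j, (i, j) \in T -> K i j != H i j) /\
    (forall i j, (i, j) \notin T -> K i j = H i j).

(* Main.v *)
Require Import Defs.
From HB Require Import structures.
From mathcomp Require Import all_boot all_order all_algebra.
From mathcomp Require Import reals complex.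
From mathcomp Require Import ring.
Import Order.TTheory GRing.Theory Num.Theory.
Local Open Scope ring_scope.
Lemma cs (C : numDomainType) (I : finType) (A : {pred I}) (b : I -> C) :
  (forall l, 0 <= b l) -> (\sum_(l in A) b l)^+2 <= #|A|%:R * \sum_(l in A) b l ^+2.
Proof.
move=> b0.
have H0: 0 <= \sum_(l in A) \sum_(m in A) (b l - b m)^+2.
  apply: sumr_ge0 => l _; apply: sumr_ge0 => m _.
  rewrite -real_normK ?exprn_ge0 //; apply: realB; exact: ger0_real.
have E: \sum_(l in A) \sum_(m in A) (b l - b m)^+2 =
   (#|A|%:R * \sum_(l in A) b l ^+2 - (\sum_(l in A) b l)^+2) *+ 2.
  under eq_bigr do under eq_bigr do rewrite sqrrB.
  under eq_bigr do rewrite !big_split /= sumrN sumr_const.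
  rewrite !big_split /= sumrN sumr_const sumrMnl.
  have ->: \sum_(i in A) (\sum_(i0 in A) b i * b i0 *+ 2) = (\sum_(l in A) b l)^+2 *+ 2.
    under eq_bigr do rewrite sumrMnl.
    rewrite sumrMnl; congr (_ *+ _); rewrite expr2 mulr_suml; apply: eq_bigr => i _.
    by rewrite mulr_sumr.
  move: (\sum_(i in A) b i ^+ 2) (\sum_(l in A) b l) => X Y.
  rewrite -[X *+ #|A|]mulr_natl -[Y ^+ 2 *+ 2]mulr_natl -[(_ - _) *+ 2]mulr_natl; ring.
move: H0; rewrite E pmulrn_lge0 // subr_ge0 //.
Qed.
Lemma orthT (C : numClosedFieldType) (n : nat) (H : 'M[C]_n) :
  (0 < n)%N -> H *m adjmx H = (n%:R)%:M ->
  forall a b, \sum_j (H j a)^* * H j b = n%:R *+ (a == b).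
Proof.
move=> n0 HH a b.
have Nn0 : (n%:R : C) != 0 by rewrite pnatr_eq0 -lt0n.
have M1 : H *m ((n%:R : C)^-1 *: adjmx H) = 1%:M.
  by rewrite -scalemxAr HH scale_scalar_mx mulVf.
have := congr1 (fun M : 'M[C]_n => M a b) (mulmx1C M1); rewrite !mxE /=.
under eq_bigr do rewrite !mxE -mulrA.
rewrite -mulr_sumr => E.
rewrite -[LHS](mulVKf Nn0) E mulr_natr; by case: (a == b).
Qed.

Lemma orth (C : numClosedFieldType) (n : nat) (H : 'M[C]_n) :
  H *m adjmx H = (n%:R)%:M ->
  forall a b, \sum_j H a j * (H b j)^* = n%:R *+ (a == b).
Proof.
move=> HH a b.
have := congr1 (fun M : 'M[C]_n => M a b) HH; rewrite !mxE /=.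
by under eq_bigr do rewrite !mxE.
Qed.

Lemma key (C : numClosedFieldType) (n : nat) (H K : 'M[C]_n) (T : {set 'I_n * 'I_n}) :
  (forall i j, `|H i j| = 1) -> H *m adjmx H = n%:R%:M -> K *m adjmx K = n%:R%:M ->
  (forall i j, (i,j) \in T -> K i j != H i j) ->
  (forall i j, (i,j) \notin T -> K i j = H i j) ->
  forall i j0, (i,j0) \in T ->
  (n <= #|[set j | (i,j) \in T]| * #|[set l | [exists j, (l,j) \in T]]|)%N.
Proof.
move=> H1 HH KK Tin Tout i j0 ij0.
have n0 : (0 < n)%N by apply: (leq_ltn_trans _ (ltn_ord j0)).
set N : C := n%:R.
have Nn0 : N != 0 by rewrite pnatr_eq0 -lt0n.
have Ngt0 : 0 < N by rewrite ltr0n.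
have HtH := @orthT _ _ _ n0 HH.
have HHe := @orth _ _ _ HH.
have KKe := @orth _ _ _ KK.
set Rs := [set l | [exists j, (l,j) \in T]].
set Ti := [set j | (i,j) \in T].
pose x j := K i j - H i j.
pose c l := (\sum_j x j * (H l j)^*) / N.
have cN l : \sum_j x j * (H l j)^* = N * c l by rewrite /c mulrC divfK.
have ca l : l \notin Rs -> c l = 0.
  rewrite inE => /existsPn hl.
  rewrite /c /x.
  under eq_bigr => j _ do rewrite -(Tout l j (hl j)) mulrBl.
  rewrite sumrB.
  have -> : \sum_j K i j * (K l j)^* = N *+ (i == l) by apply: KKe.
  have -> : \sum_j H i j * (K l j)^* = N *+ (i == l).
    rewrite -HHe; apply: eq_bigr => j _; by rewrite (Tout l j (hl j)).
  by rewrite subrr mul0r.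
have xb j : x j = \sum_l c l * H l j.
  symmetry.
  transitivity (\sum_l \sum_j' x j' * ((H l j')^* * H l j) / N).
    apply: eq_bigr => l _; rewrite /c mulrAC !mulr_suml.
    by apply: eq_bigr => j' _; rewrite mulrA.
  rewrite exchange_big /=.
  under eq_bigr => j' _ do rewrite -mulr_suml -mulr_sumr HtH.
  rewrite (bigD1 j) //= big1 ?addr0 => [|j' /negbTE ->]; last by rewrite mulr0n mulr0 mul0r.
  by rewrite eqxx mulr1n mulfK.
have xc j : (x j)^* = \sum_l (c l)^* * (H l j)^*.
  by rewrite {1}xb rmorph_sum; apply: eq_bigr => l _; rewrite rmorphM.
have pars : \sum_j `|x j|^+2 = N * \sum_l `|c l|^+2.
  under eq_bigr do rewrite normCK xc mulr_sumr.
  rewrite exchange_big /= mulr_sumr; apply: eq_bigr => l _.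
  rewrite normCK mulrA -cN mulr_suml; apply: eq_bigr => j _.
  by rewrite -mulrA [X in _ * X = _]mulrC.
have ca2 : \sum_l `|c l|^+2 = \sum_(l in Rs) `|c l|^+2.
  rewrite (bigID (fun l => l \in Rs)) /= [X in _ + X]big1 ?addr0 // => l /ca ->.
  by rewrite normr0 expr0n.
set S := \sum_(l in Rs) `|c l|^+2.
have NS : N * S = \sum_j `|x j|^+2 by rewrite pars ca2.
have xd j : `|x j| <= \sum_(l in Rs) `|c l|.
  rewrite xb (bigID (fun l => l \in Rs)) /= [X in _ + X]big1 ?addr0 => [|l /ca ->]; last by rewrite mul0r.
  apply: le_trans (ler_norm_sum _ _ _) _.
  by apply: ler_sum => l _; rewrite normrM H1 mulr1.
have xe j : `|x j|^+2 <= #|Rs|%:R * S.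
  have := @cs _ _ Rs (fun l => `|c l|) (fun l => normr_ge0 _).
  apply: le_trans.
  apply: lerXn2r; rewrite ?nnegrE //; apply: sumr_ge0 => l _; exact: normr_ge0.
have xf : \sum_j `|x j|^+2 <= (#|Ti| * #|Rs|)%:R * S.
  rewrite (bigID (fun j => j \in Ti)) /= [X in _ + X]big1 ?addr0 => [|j]; last first.
    by rewrite inE => /Tout; rewrite /x => ->; rewrite subrr normr0 expr0n.
  apply: le_trans (ler_sum _ (fun j _ => xe j)) _.
  by rewrite sumr_const natrM -mulrA [X in _ <= X]mulr_natl.
have Spos : 0 < S.
  have : 0 < N * S.
    rewrite NS (bigD1 j0) //=.
    apply: (@lt_le_trans _ _ (`|x j0|^+2)).
      by rewrite exprn_gt0 // normr_gt0 subr_eq0 Tin.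
    by rewrite lerDl sumr_ge0 // => j _; rewrite exprn_ge0.
  by rewrite pmulr_rgt0.
by move: xf; rewrite -NS ler_pM2r // ler_nat.
Qed.

Theorem theorem7p3 (R : realType) (n : nat) (H : 'M[R[i]]_n)
    (T : {set 'I_n * 'I_n}) :
  complex_hadamard H -> is_trade H T -> (n <= #|T|)%N.
Proof.
move=> [H1 HH] [Tn0 [K [[K1 KK] [Tin Tout]]]].
set Rs := [set l | [exists j, (l,j) \in T]].
have kr : forall i, i \in Rs -> (n <= #|[set j | (i,j) \in T]| * #|Rs|)%N.
  move=> i; rewrite inE => /existsP [j ij]; exact: (@key _ n H K T H1 HH KK Tin Tout i j ij).
have r0 : (0 < #|Rs|)%N.
  case/set0Pn: Tn0 => [[i j] ij]; apply/card_gt0P; exists i.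
  by rewrite inE; apply/existsP; exists j.
have cardT : #|T| = (\sum_i #|[set j | (i,j) \in T]|)%N.
  under [RHS]eq_bigr do rewrite -sum1_card big_mkcond /=.
  rewrite pair_bigA /=.
  under eq_bigr => p _ do rewrite inE -surjective_pairing.
  by rewrite -big_mkcond /= sum1_card.
rewrite -(leq_pmul2r r0) cardT big_distrl /=.
rewrite (bigID (fun i => i \in Rs)) /=.
apply: (leq_trans _ (leq_addr _ _)).
rewrite mulnC -sum_nat_const.
by apply: leq_sum => i; exact: kr.
Qed.
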